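(* Let $K\in\mathbb{R}^{n\times n}$ be any positive semi-definite matrix, $\widetilde{S}\in\mathbb{R}^{n\times m}$, $\lambda>0$, and let $f:\mathbb{R}^n\to\mathbb{R}$ be convex and differentiable with $\mu$-Lipschitz gradient. Let $w^*$ be any minimizer of $w\mapsto f(Kw)+\frac{\lambda}{2}w^\top Kw$ over $\mathbb{R}^n$, let $\alpha^*$ be any minimizer of $\alpha\mapsto f(K\widetilde{S}\alpha)+\frac{\lambda}{2}\alpha^\top\widetilde{S}^\top K\widetilde{S}\alpha$ over $\mathbb{R}^m$, and define $\widetilde{w}=-\frac{1}{\lambda}\nabla f(K\widetilde{S}\alpha^* )$. If $\lambda\ge 2\mu Z_f^2$ with $Z_f=Z_f(K^{1/2},K^{1/2}\widetilde{S})$, then $$\|K^{1/2}(\widetilde{w}-w^* )\|_2\le\sqrt{\frac{\mu}{2\lambda}}\,Z_f\,\|K^{1/2}w^*\|_2 .$$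
   Context: $K^{1/2}$ is the p.s.d. square root of $K$. $f^*(z)=\sup_w\{w^\top z-f(w)\}$ is the Fenchel conjugate of $f$ with domain $\mathrm{dom} f^*$. For a matrix $B\in\mathbb{R}^{n\times p}$ and $S\in\mathbb{R}^{p\times m}$: let $x_B^*$ be the minimizer of $x\mapsto f(Bx)+\frac{\lambda}{2}\|x\|_2^2$, $z^*=\nabla f(Bx_B^* )$, $P_S=S(S^\top S)^\dagger S^\top$, $P_S^\perp=I_p-P_S$, and $Z_f(B,S)=\sup_{\Delta\in(\mathrm{dom} f^*-z^* ),\,\Delta\ne0}\left(\frac{\Delta^\top BP_S^\perp B^\top\Delta}{\|\Delta\|_2^2}\right)^{1/2}$. *)

(* Defs.v *)
From HB Require Import structures.
From mathcomp Require Import all_boot.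
From Stdlib Require Import Reals.
Set Implicit Arguments. Unset Strict Implicit. Unset Printing Implicit Defensive.
Local Open Scope R_scope.

HB.instance Definition _ :=
  Monoid.isComLaw.Build R 0%R Rplus
    (fun a b c => esym (Rplus_assoc a b c)) Rplus_comm Rplus_0_l.

Definition vec (n : nat) := 'I_n -> R.
Definition mat (n m : nat) := 'I_n -> 'I_m -> R.

Definition dot {n} (u v : vec n) : R := \big[Rplus/0%R]_(i < n) (u i * v i).
Definition norm2 {n} (u : vec n) : R := sqrt (dot u u).
Definition vadd {n} (u v : vec n) : vec n := fun i => u i + v i.
Definition vsub {n} (u v : vec n) : vec n := fun i => u i - v i.
Definition vscale {n} (a : R) (u : vec n) : vec n := fun i => a * u i.

Definition mv {n m} (A : mat n m) (x : vec m) : vec n :=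
  fun i => \big[Rplus/0%R]_(j < m) (A i j * x j).
Definition mm {n p m} (A : mat n p) (B : mat p m) : mat n m :=
  fun i j => \big[Rplus/0%R]_(k < p) (A i k * B k j).
Definition tr {n m} (A : mat n m) : mat m n := fun i j => A j i.
Definition idm (n : nat) : mat n n := fun i j => if i == j then 1 else 0.
Definition msub {n m} (A B : mat n m) : mat n m := fun i j => A i j - B i j.
Definition meq {n m} (A B : mat n m) : Prop := forall i j, A i j = B i j.

Definition psd {n} (K : mat n n) : Prop :=
  (forall i j, K i j = K j i) /\ (forall x : vec n, 0 <= dot x (mv K x)).

Definition is_psd_sqrt {n} (K Q : mat n n) : Prop := psd Q /\ meq (mm Q Q) K.

Definition is_pinv {n m} (A : mat n m) (X : mat m n) : Prop :=
  meq (mm A (mm X A)) A /\ meq (mm X (mm A X)) X /\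
  meq (tr (mm A X)) (mm A X) /\ meq (tr (mm X A)) (mm X A).

(* P_S = S (S^T S)^dagger S^T, given X = (S^T S)^dagger; P_S^perp = I - P_S *)
Definition projS {p m} (S : mat p m) (X : mat m m) : mat p p := mm S (mm X (tr S)).
Definition projS_perp {p m} (S : mat p m) (X : mat m m) : mat p p :=
  msub (@idm p) (projS S X).

Definition convex {n} (f : vec n -> R) : Prop :=
  forall (x y : vec n) (t : R), 0 <= t <= 1 ->
    f (vadd (vscale t x) (vscale (1 - t) y)) <= t * f x + (1 - t) * f y.

Definition has_gradient {n} (f : vec n -> R) (g : vec n -> vec n) : Prop :=
  forall (x : vec n) (eps : R), 0 < eps -> exists delta, 0 < delta /\
    forall h : vec n, norm2 h < delta ->
      Rabs (f (vadd x h) - f x - dot (g x) h) <= eps * norm2 h.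

Definition lipschitz {n} (g : vec n -> vec n) (mu : R) : Prop :=
  forall x y : vec n, norm2 (vsub (g x) (g y)) <= mu * norm2 (vsub x y).

Definition is_minimizer {p} (F : vec p -> R) (x : vec p) : Prop :=
  forall y : vec p, F x <= F y.

Definition in_dom_conj {n} (f : vec n -> R) (z : vec n) : Prop :=
  exists M, forall w : vec n, dot w z - f w <= M.

(* Z_f(B,S) = sup over Delta in (dom f-star - z-star), Delta <> 0, of
   (Delta^T M Delta / ||Delta||^2)^{1/2}, where M = B P_S^perp B^T.
   Zf_is f zs M Z : Z is this supremum (a finite real); 0 is added to the
   set (harmless as all values are >= 0; gives sup of empty set = 0). *)
Definition Zf_set {n} (f : vec n -> R) (zs : vec n) (M : mat n n) : R -> Prop :=
  fun r => r = 0 \/ exists D : vec n, (exists i, D i <> 0) /\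
    in_dom_conj f (vadd zs D) /\
    r = sqrt (dot D (mv M D) / (norm2 D) ^ 2).
Definition Zf_is {n} (f : vec n -> R) (zs : vec n) (M : mat n n) (Z : R) : Prop :=
  is_lub (Zf_set f zs M) Z.

(* Main.v *)
Require Import Defs.
From HB Require Import structures.
From mathcomp Require Import all_boot.
From Stdlib Require Import Reals Lra Psatz FunctionalExtensionality Classical.
From Coquelicot Require Import Coquelicot.
Local Open Scope R_scope.

Set Implicit Arguments. Unset Strict Implicit.

Lemma big_scale n (a : R) (F : 'I_n -> R) :
  \big[Rplus/0]_(i < n) (a * F i) = a * \big[Rplus/0]_(i < n) F i.
Proof. elim/big_rec2: _ => [|i x y _ ->]; ring. Qed.

Lemma big_lin n (a b : R) (F G : 'I_n -> R) :
  \big[Rplus/0]_(i < n) (a * F i + b * G i) =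
  a * \big[Rplus/0]_(i < n) F i + b * \big[Rplus/0]_(i < n) G i.
Proof. elim/big_rec3: _ => [|i x y z _ ->]; ring. Qed.

Lemma big_ext n (F G : 'I_n -> R) : (forall i, F i = G i) ->
  \big[Rplus/0]_(i < n) F i = \big[Rplus/0]_(i < n) G i.
Proof. move=> H; apply: eq_bigr => i _; apply H. Qed.

Lemma big_ge0 n (F : 'I_n -> R) : (forall i, 0 <= F i) ->
  0 <= \big[Rplus/0]_(i < n) F i.
Proof. move=> H; elim/big_ind: _ => //; [lra | move=> x y; lra]. Qed.

Section Dot.
Variable n : nat.
Implicit Types u v w : vec n.

Lemma dot_sym u v : dot u v = dot v u.
Proof. apply big_ext => i; ring. Qed.

Lemma dot_ext u u' v : (forall i, u i = u' i) -> dot u v = dot u' v.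
Proof. move=> H; apply big_ext => i; by rewrite H. Qed.

Lemma dot_ext_r u v v' : (forall i, v i = v' i) -> dot u v = dot u v'.
Proof. move=> H; apply big_ext => i; by rewrite H. Qed.

Lemma dot0l w : dot (fun _ => 0) w = 0.
Proof. rewrite /dot big1 // => i _; ring. Qed.
Lemma dot0r w : dot w (fun _ => 0) = 0.
Proof. rewrite /dot big1 // => i _; ring. Qed.

Lemma dot_comb_l (a b : R) u v w :
  dot (fun i => a * u i + b * v i) w = a * dot u w + b * dot v w.
Proof. rewrite /dot -big_lin; apply big_ext => i; ring. Qed.

Lemma dot_add_l u v w : dot (vadd u v) w = dot u w + dot v w.
Proof. rewrite (@dot_ext _ (fun i => 1 * u i + 1 * v i)) ?dot_comb_l /vadd; [ring|move=>i;ring]. Qed.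
Lemma dot_sub_l u v w : dot (vsub u v) w = dot u w - dot v w.
Proof. rewrite (@dot_ext _ (fun i => 1 * u i + (-1) * v i)) ?dot_comb_l /vsub; [ring|move=>i;ring]. Qed.
Lemma dot_scale_l a u w : dot (vscale a u) w = a * dot u w.
Proof. rewrite (@dot_ext _ (fun i => a * u i + 0 * u i)) ?dot_comb_l /vscale; [ring|move=>i;ring]. Qed.
Lemma dot_add_r u v w : dot w (vadd u v) = dot w u + dot w v.
Proof. by rewrite dot_sym dot_add_l !(dot_sym w). Qed.
Lemma dot_sub_r u v w : dot w (vsub u v) = dot w u - dot w v.
Proof. by rewrite dot_sym dot_sub_l !(dot_sym w). Qed.
Lemma dot_scale_r a u w : dot w (vscale a u) = a * dot w u.
Proof. by rewrite dot_sym dot_scale_l (dot_sym w). Qed.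

Lemma dot_ge0 u : 0 <= dot u u.
Proof. apply big_ge0 => i; nra. Qed.

Lemma dot_eq0 u : dot u u = 0 -> forall i, u i = 0.
Proof.
move=> H i; move: H; rewrite /dot (bigD1 i) //= => H.
have : 0 <= \big[Rplus/0]_(j < n | j != i) (u j * u j).
  elim/big_ind: _ => //; [lra | move=> x y; lra | move=> j _; nra].
move=> Hb; set S := bigop _ _ _ in H Hb; nra.
Qed.

Lemma orth_eq0 u : (forall d, dot u d = 0) -> forall i, u i = 0.
Proof. move=> H; apply dot_eq0; apply H. Qed.

Lemma cs_sq u v : (dot u v)^2 <= dot u u * dot v v.
Proof.
have [Hv|Hv] := Req_dec (dot v v) 0.
  have Z := @dot_eq0 v Hv.
  rewrite (dot_sym u) (@dot_ext v (fun _ => 0) u) //.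
  rewrite Hv {1}/dot big1; last by move=> i _; ring. nra.
set s := dot u v / dot v v.
have := dot_ge0 (vsub u (vscale s v)).
rewrite !dot_sub_l !dot_sub_r !dot_scale_l !dot_scale_r (dot_sym v u) => H.
have Hp := dot_ge0 v.
have Hs : s * dot v v = dot u v by rewrite /s; field.
nra.
Qed.

Lemma cs u v : dot u v <= norm2 u * norm2 v.
Proof.
rewrite /norm2 -sqrt_mult; try apply dot_ge0.
apply: Rle_trans (Rle_abs _) _.
rewrite -sqrt_Rsqr_abs; apply sqrt_le_1_alt; rewrite /Rsqr.
have := cs_sq u v; lra.
Qed.

Lemma norm2_sq u : (norm2 u)^2 = dot u u.
Proof. rewrite /norm2 /= Rmult_1_r sqrt_sqrt //; apply dot_ge0. Qed.
Lemma norm2_ge0 u : 0 <= norm2 u.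
Proof. apply sqrt_pos. Qed.

Lemma norm2_scale a u : norm2 (vscale a u) = Rabs a * norm2 u.
Proof.
rewrite /norm2 dot_scale_l dot_scale_r -Rmult_assoc sqrt_mult.
- by rewrite -sqrt_Rsqr_abs.
- nra.
- apply dot_ge0.
Qed.

Lemma norm2_ext u v : (forall i, u i = v i) -> norm2 u = norm2 v.
Proof. move=> H; by rewrite (functional_extensionality u v H). Qed.

End Dot.

Lemma mv_ext {n m} (A : mat n m) x y : (forall i, x i = y i) -> mv A x = mv A y.
Proof. move=> H; by rewrite (functional_extensionality x y H). Qed.

Lemma mv_meq {n m} (A B : mat n m) x : meq A B -> mv A x = mv B x.
Proof. move=> H; apply functional_extensionality => i; apply big_ext => j; by rewrite H. Qed.

Lemma mv_comb {n m} (A : mat n m) a b x y :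
  mv A (fun i => a * x i + b * y i) = fun i => a * mv A x i + b * mv A y i.
Proof. apply functional_extensionality => i; rewrite /mv -big_lin; apply big_ext => j; ring. Qed.

Lemma mv_add {n m} (A : mat n m) x y : mv A (vadd x y) = vadd (mv A x) (mv A y).
Proof. rewrite /vadd (@mv_ext _ _ _ _ (fun i => 1 * x i + 1 * y i)) ?mv_comb;
  [apply functional_extensionality => i; ring | move=> i; ring]. Qed.
Lemma mv_sub {n m} (A : mat n m) x y : mv A (vsub x y) = vsub (mv A x) (mv A y).
Proof. rewrite /vsub (@mv_ext _ _ _ _ (fun i => 1 * x i + (-1) * y i)) ?mv_comb;
  [apply functional_extensionality => i; ring | move=> i; ring]. Qed.
Lemma mv_scale {n m} (A : mat n m) a x : mv A (vscale a x) = vscale a (mv A x).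
Proof. rewrite /vscale (@mv_ext _ _ _ _ (fun i => a * x i + 0 * x i)) ?mv_comb;
  [apply functional_extensionality => i; ring | move=> i; ring]. Qed.

Lemma dot_mv_tr {n m} (A : mat n m) u v : dot u (mv A v) = dot (mv (tr A) u) v.
Proof.
rewrite /dot /mv /tr.
rewrite (@big_ext _ _ (fun i => \big[Rplus/0]_(j < m) (u i * A i j * v j))); last first.
  move=> i; rewrite -big_scale; apply big_ext => j; ring.
rewrite exchange_big; apply big_ext => j.
rewrite Rmult_comm -big_scale; apply big_ext => i; ring.
Qed.

Lemma dot_mv_sym {n} (A : mat n n) u v : (forall i j, A i j = A j i) ->
  dot u (mv A v) = dot (mv A u) v.
Proof.
move=> H; rewrite dot_mv_tr; congr dot; apply functional_extensionality => i.
apply big_ext => j; by rewrite /tr H.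
Qed.

Lemma mv_mm {n p m} (A : mat n p) (B : mat p m) x : mv (mm A B) x = mv A (mv B x).
Proof.
apply functional_extensionality => i; rewrite /mv /mm.
rewrite (@big_ext _ _ (fun j => \big[Rplus/0]_(k < p) (A i k * B k j * x j))); last first.
  move=> j; rewrite Rmult_comm -big_scale; apply big_ext => k; ring.
rewrite exchange_big; apply big_ext => k.
rewrite -big_scale; apply big_ext => j; ring.
Qed.

Lemma mv_idm {n : nat} (x : vec n) : mv (@idm n) x = x.
Proof.
apply functional_extensionality => i; rewrite /mv /idm (bigD1 i) //= eqxx big1.
  ring.
move=> j /negbTE; rewrite eq_sym => ->; ring.
Qed.

Lemma mv_msub {n m} (A B : mat n m) x : mv (msub A B) x = vsub (mv A x) (mv B x).
Proof.
apply functional_extensionality => i; rewrite /mv /msub /vsub.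
transitivity (1 * \big[Rplus/0]_(j < m) (A i j * x j) + -1 * \big[Rplus/0]_(j < m) (B i j * x j)); last ring.
rewrite -big_lin; apply big_ext => j; ring.
Qed.

Unset Implicit Arguments. Set Strict Implicit.

Section Calc.
Variable n : nat.
Variable f : vec n -> R.
Variable g : vec n -> vec n.
Hypothesis Hg : has_gradient f g.

Lemma fext (u v : vec n) : (forall i, u i = v i) -> f u = f v.
Proof. move=> H; by rewrite (functional_extensionality u v H). Qed.

Lemma dir_deriv (y d : vec n) c :
  derivable_pt_lim (fun t => f (vadd y (vscale t d))) c
    (dot (g (vadd y (vscale c d))) d).
Proof.
move=> eps Heps.
set p := vadd y (vscale c d).
set N := norm2 d.
have HN : 0 <= N by apply norm2_ge0.
have He' : 0 < eps / (2 * (N + 1)) by apply Rmult_lt_0_compat; [lra | apply Rinv_0_lt_compat; lra].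
have [delta [Hd Hb]] := Hg p _ He'.
have Hd' : 0 < delta / (N + 1) by apply Rmult_lt_0_compat; [lra | apply Rinv_0_lt_compat; lra].
exists (mkposreal _ Hd') => h hne /= hlt.
have Hh : f (vadd y (vscale (c + h) d)) = f (vadd p (vscale h d)).
  apply fext => i; rewrite /p /vadd /vscale; ring.
rewrite Hh.
have Hah : 0 < Rabs h by apply Rabs_pos_lt.
have Hn : norm2 (vscale h d) < delta.
  rewrite norm2_scale -/N.
  have : Rabs h * (N + 1) < delta.
    have := Rmult_lt_compat_r (N+1) _ _ ltac:(lra) hlt.
    rewrite /Rdiv Rmult_assoc Rinv_l; lra.
  nra.
have := Hb _ Hn.
rewrite dot_scale_r norm2_scale -/N => B.
set A := f (vadd p (vscale h d)) - f p.
set G := dot (g p) d.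
have E : A / h - G = (A - h * G) / h by field.
rewrite E Rabs_div //.
apply (Rmult_lt_reg_r (Rabs h)) => //.
rewrite /Rdiv Rmult_assoc Rinv_l; last lra.
rewrite Rmult_1_r.
have : eps / (2 * (N + 1)) * (Rabs h * N) < eps * Rabs h.
  have -> : eps / (2 * (N + 1)) * (Rabs h * N) = (eps * Rabs h) * (N / (2 * (N+1))) by field; lra.
  have : N / (2 * (N + 1)) < 1.
    apply (Rmult_lt_reg_r (2 * (N+1))); first lra.
    rewrite /Rdiv Rmult_assoc Rinv_l; lra.
  have : 0 < eps * Rabs h by nra.
  nra.
rewrite /A /G in B *. lra.
Qed.

Hypothesis Hc : convex f.

Lemma grad_ineq x y : f x + dot (g x) (vsub y x) <= f y.
Proof.
set d := vsub y x.
have D := dir_deriv x d 0.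
have E0 : vadd x (vscale 0 d) = x.
  apply functional_extensionality => i; rewrite /vadd /vscale; ring.
rewrite E0 in D.
have C : forall t, 0 <= t <= 1 -> f (vadd x (vscale t d)) <= t * f y + (1 - t) * f x.
  move=> t Ht; have := Hc y x _ Ht.
  by rewrite (@fext (vadd (vscale t y) (vscale (1 - t) x)) (vadd x (vscale t d)));
    last by move=> i; rewrite /vadd /vscale /d /vsub; ring.
apply Rnot_lt_le => Hlt.
set l := dot (g x) d in D Hlt.
have Heps : 0 < f x + l - f y by lra.
have [delta Hdel] := D _ Heps.
set h := Rmin 1 (delta / 2).
have Hdp := cond_pos delta.
have hpos : 0 < h by apply Rmin_pos; lra.
have hle : h <= 1 by apply Rmin_l.
have hle2 : h <= delta / 2 by apply Rmin_r.
have := Hdel h ltac:(lra) ltac:(rewrite Rabs_pos_eq; lra).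
rewrite Rplus_0_l E0.
have := C h ltac:(lra).
set F := f (vadd x (vscale h d)) => CF.
have -> : (F - f x) / h - l = ((F - f x) - h * l) / h by field; lra.
rewrite Rabs_div; last lra.
rewrite (Rabs_pos_eq h); last lra.
move=> Hq.
have := Rmult_lt_compat_r h _ _ hpos Hq.
rewrite /Rdiv Rmult_assoc Rinv_l; last lra.
move=> Hq2.
have := Rle_abs (- (F - f x - h * l)); rewrite Rabs_Ropp.
nra.
Qed.

Lemma mono x y : 0 <= dot (vsub (g x) (g y)) (vsub x y).
Proof.
have := grad_ineq x y; have := grad_ineq y x.
rewrite dot_sub_l !dot_sub_r.
have := dot_sym (g x) x; have := dot_sym (g y) y. lra.
Qed.


Variable mu : R.
Hypothesis Hl : lipschitz g mu.

Lemma descent y d : f (vadd y d) <= f y + dot (g y) d + mu / 2 * dot d d.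
Proof.
set a := dot (g y) d. set b := mu / 2 * dot d d.
set phi := fun t => f (vadd y (vscale t d)) - (a * t + b * t ^ 2).
set phi' := fun c => dot (g (vadd y (vscale c d))) d - (a + 2 * b * c).
have Hd : forall c, 0 <= c <= 1 -> derivable_pt_lim phi c (phi' c).
  move=> c _.
  have P : derivable_pt_lim (fun t => a * t + b * t ^ 2) c (a + 2 * b * c).
    apply is_derive_Reals. auto_derive. auto. ring.
  exact: (derivable_pt_lim_minus _ _ _ _ _ (dir_deriv y d c) P).
have [c [Ec Hc01]] := MVT_cor2 phi phi' 0 1 ltac:(lra) Hd.
have Hp : phi' c <= 0.
  rewrite /phi'.
  set p := vadd y (vscale c d).
  have E1 : dot (g p) d - a = dot (vsub (g p) (g y)) d by rewrite dot_sub_l.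
  have C1 := cs (vsub (g p) (g y)) d.
  have L1 := Hl p y.
  have Np : norm2 (vsub p y) = c * norm2 d.
    rewrite (@norm2_ext _ _ (vscale c d)); last by move=> i; rewrite /vsub /p /vadd /vscale; ring.
    rewrite norm2_scale Rabs_pos_eq //; lra.
  rewrite Np in L1.
  have N0 := norm2_ge0 d. have N1 := norm2_ge0 (vsub (g p) (g y)).
  have N2 := norm2_sq d. rewrite /= Rmult_1_r in N2.
  rewrite /b.
  have : norm2 (vsub (g p) (g y)) * norm2 d <= mu * (c * norm2 d) * norm2 d by nra.
  nra.
have E0 : phi 0 = f y.
  rewrite /phi (@fext (vadd y (vscale 0 d)) y); last by move=> i; rewrite /vadd /vscale; ring.
  ring.
have E1 : phi 1 = f (vadd y d) - (a + b).
  rewrite /phi (@fext (vadd y (vscale 1 d)) (vadd y d)); last by move=> i; rewrite /vadd /vscale; ring.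
  ring.
rewrite E0 E1 in Ec. rewrite -/a -/b. nra.
Qed.

Lemma one_side x y (Hmu : 0 < mu) :
  f x + dot (g x) (vsub y x) + dot (vsub (g y) (g x)) (vsub (g y) (g x)) / (2 * mu) <= f y.
Proof.
set e := vsub (g y) (g x).
set d := vscale (- / mu) e.
set w := vadd y d.
have G1 := grad_ineq x w.
have G2 := descent y d.
have E1 : dot (g x) (vsub w x) = dot (g x) (vsub y x) + dot (g x) d.
  rewrite -dot_add_r; apply: dot_ext_r => i; rewrite /w /vadd /vsub; ring.
rewrite E1 in G1.
rewrite /d !dot_scale_r !dot_scale_l in G1 G2.
have E2 : dot e e = dot (g y) e - dot (g x) e by rewrite {1}/e dot_sub_l.
set E := dot e e in E2 *.
have Hm : mu / 2 * (- / mu * (- / mu * E)) = E / (2 * mu) by field; lra.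
have Hm2 : E / (2 * mu) = / mu * E - E / (2 * mu) by field; lra.
rewrite -/w -/E Hm in G2. have H3 : - / mu * dot (g y) e - - / mu * dot (g x) e = - / mu * E by rewrite E2; ring. lra.
Qed.

Lemma coco a b :
  dot (vsub (g a) (g b)) (vsub (g a) (g b)) <= mu * dot (vsub (g a) (g b)) (vsub a b).
Proof.
set e := vsub (g a) (g b).
have [Hmu|Hmu] := Rle_lt_dec mu 0.
  have L := Hl a b.
  have N0 := norm2_ge0 e. have N1 := norm2_ge0 (vsub a b).
  rewrite -/e in L. have Z : norm2 e = 0 by nra.
  have Z2 : dot e e = 0 by rewrite -norm2_sq Z; ring.
  have Z3 := dot_eq0 Z2.
  rewrite Z2 (@dot_ext _ e (fun _ => 0)) //.
  rewrite /dot big1; [lra | move=> i _; ring].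
have O1 := one_side b a Hmu.
have O2 := one_side a b Hmu.
have E : dot (vsub (g b) (g a)) (vsub (g b) (g a)) = dot e e.
  rewrite (@dot_ext _ _ (vscale (-1) e)); last by move=> i; rewrite /e /vsub /vscale; ring.
  rewrite dot_scale_l dot_sym (@dot_ext _ _ (vscale (-1) e)); last by move=> i; rewrite /e /vsub /vscale; ring.
  rewrite dot_scale_l; ring.
rewrite E -/e in O2 O1.
have S : dot e (vsub a b) = dot (g a) (vsub a b) + dot (g b) (vsub b a).
  rewrite /e dot_sub_l.
  rewrite (@dot_ext_r _ (g b) (vsub b a) (vscale (-1) (vsub a b))); last by move=> i; rewrite /vsub /vscale; ring.
  rewrite dot_scale_r; ring.
set Ee := dot e e in O1 O2 *.
have : Ee / mu <= dot e (vsub a b).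
  have -> : Ee / mu = Ee / (2 * mu) + Ee / (2 * mu) by field; lra.
  rewrite !dot_sub_r in O1 O2 S *; lra.
move=> H.
have := Rmult_le_compat_l mu _ _ (Rlt_le _ _ Hmu) H.
have -> : mu * (Ee / mu) = Ee by field; lra.
done.
Qed.

End Calc.

Lemma foc {n p} (f : vec n -> R) g (A : mat n p) (Q : vec p -> R) lam x d b e :
  has_gradient f g -> (forall t, Q (vadd x (vscale t d)) = Q x + 2 * t * b + t ^ 2 * e) ->
  is_minimizer (fun w => f (mv A w) + lam / 2 * Q w) x ->
  dot (g (mv A x)) (mv A d) + lam * b = 0.
Proof.
move=> Hg HQ Hmin.
set y := mv A x; set v := mv A d.
set psi := fun t => f (vadd y (vscale t v)) + lam / 2 * (Q x + 2 * t * b + t ^ 2 * e).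
have P : derivable_pt_lim (fun t => lam / 2 * (Q x + 2 * t * b + t ^ 2 * e)) 0 (lam / 2 * (2 * b + 2 * 0 * e)).
  apply is_derive_Reals. auto_derive. auto. ring.
have D := derivable_pt_lim_plus _ _ _ _ _ (@dir_deriv _ f g Hg y v 0) P.
have E0 : vadd y (vscale 0 v) = y.
  apply functional_extensionality => i; rewrite /vadd /vscale; ring.
rewrite E0 in D. have D2 : derivable_pt_lim psi 0 (dot (g y) v + lam / 2 * (2 * b + 2 * 0 * e)) := D.
have Hpsi : forall t, psi t = f (mv A (vadd x (vscale t d))) + lam / 2 * Q (vadd x (vscale t d)).
  move=> t; rewrite /psi HQ mv_add mv_scale //.
have H0 := deriv_minimum psi (-1) 1 0 (exist _ _ D2) ltac:(lra) ltac:(lra).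
have : derive_pt psi 0 (exist _ _ D2) = 0.
  apply H0 => t _ _.
  rewrite !Hpsi.
  have -> : vadd x (vscale 0 d) = x.
    apply functional_extensionality => i; rewrite /vadd /vscale; ring.
  apply Hmin.
rewrite /derive_pt /=. lra.
Qed.

Lemma scalar (lam mu Z U P2 Q2 X2 T2 c Du : R) :
 0 < lam -> 0 < mu -> 0 <= Z -> 2*mu*Z^2 <= lam -> 0 <= P2 -> 0 <= Q2 -> 0 <= X2 -> 0 < T2 ->
 U = P2 + Q2 -> T2 <= mu * Du -> lam * Du = -P2 - lam*c -> c^2 <= Q2*X2 -> Q2 <= Z^2*T2 ->
 U <= lam*mu*Z^2*X2/2.
Proof.
move=> Hl Hm HZ HlZ HP HQ HX HT EU HD ED Hc HQZ.
set Qn := sqrt Q2. set Xn := sqrt X2. set t := sqrt T2.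
have EQ : Q2 = Qn * Qn by rewrite /Qn sqrt_sqrt.
have EX : X2 = Xn * Xn by rewrite /Xn sqrt_sqrt.
have ET : T2 = t * t by rewrite /t sqrt_sqrt; lra.
have HQn : 0 <= Qn := sqrt_pos _. have HXn : 0 <= Xn := sqrt_pos _. have Ht : 0 <= t := sqrt_pos _.
rewrite EQ EX ET in Hc HQZ EU HD *.
have Hc2 : - (Qn * Xn) <= c.
  apply Rnot_lt_le => H. have : 0 < (-(Qn*Xn) - c) * (Qn*Xn - c) by apply Rmult_lt_0_compat; nra. nra.
have HQt : Qn <= Z * t.
  apply Rnot_lt_le => H. have : 0 < (Qn - Z*t) * (Qn + Z*t) by apply Rmult_lt_0_compat; nra. nra.
have S1 : lam * (t * t) <= mu * (- P2 - lam * c).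
  rewrite -ED. nra.
have S2 : mu * P2 <= - lam * (t*t) + mu * lam * Qn * Xn.
  have : mu*lam*(-(Qn*Xn)) <= mu*lam*c by apply Rmult_le_compat_l; nra.
  nra.
have S3 : mu * (Qn * Qn) <= lam * (t*t) / 2.
  have : Qn * Qn <= Z^2 * (t*t) by nra.
  nra.
have S4 : mu * U <= mu * lam * Z * t * Xn - lam * (t*t) / 2.
  have : mu * lam * Qn * Xn <= mu * lam * (Z * t) * Xn.
    have : 0 <= mu * lam * Xn by apply Rmult_le_pos; nra.
    nra.
  nra.
have S5 : mu * U <= mu * (lam*mu*Z^2*(Xn*Xn)/2).
  have : 0 <= lam / 2 * (t - mu * Z * Xn)^2.
    apply Rmult_le_pos; [lra | apply pow2_ge_0].
  nra.
apply (Rmult_le_reg_l mu) => //.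
Qed.

Theorem theorem3 (n m : nat) (K : mat n n) (St : mat n m) (lam mu : R)
    (f : vec n -> R) (g : vec n -> vec n)
    (Kh : mat n n) (w_star : vec n) (alpha_star : vec m)
    (xB : vec n) (X : mat m m) (Z : R) :
  psd K ->
  0 < lam ->
  convex f ->
  has_gradient f g ->
  lipschitz g mu ->
  (* Kh = K^{1/2} *)
  is_psd_sqrt K Kh ->
  is_minimizer (fun w : vec n => f (mv K w) + lam / 2 * dot w (mv K w)) w_star ->
  is_minimizer (fun a : vec m =>
      f (mv K (mv St a)) + lam / 2 * dot a (mv (mm (tr St) (mm K St)) a)) alpha_star ->
  (* x_B^* for B = K^{1/2} *)
  is_minimizer (fun x : vec n => f (mv Kh x) + lam / 2 * (norm2 x) ^ 2) xB ->
  (* X = (S^T S)^dagger for S = K^{1/2} St *)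
  is_pinv (mm (tr (mm Kh St)) (mm Kh St)) X ->
  (* Z = Z_f(K^{1/2}, K^{1/2} St) *)
  Zf_is f (g (mv Kh xB)) (mm Kh (mm (projS_perp (mm Kh St) X) (tr Kh))) Z ->
  lam >= 2 * mu * Z ^ 2 ->
  let wt := vscale (- / lam) (g (mv K (mv St alpha_star))) in
  norm2 (mv Kh (vsub wt w_star)) <= sqrt (mu / (2 * lam)) * Z * norm2 (mv Kh w_star).
Proof.
move=> [Ksym Kpsd] Hlam Hc Hg Hl [[Bsym Bpsd] HKK] Hw Ha HxB Hpinv HZ HlZ wt.
have mvK : forall x, mv K x = mv Kh (mv Kh x).
  move=> x; by rewrite -(mv_meq x HKK) mv_mm.
have dotB : forall u v, dot u (mv Kh v) = dot (mv Kh u) v.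
  move=> u v; exact: dot_mv_sym.
have dotK : forall u v, dot u (mv K v) = dot (mv K u) v.
  move=> u v; exact: dot_mv_sym.
set zs := g (mv Kh xB).
have FB : forall i, mv Kh zs i + lam * xB i = 0.
  apply orth_eq0 => d.
  have HQ : forall t, norm2 (vadd xB (vscale t d)) ^ 2 = norm2 xB ^ 2 + 2 * t * dot xB d + t ^ 2 * dot d d.
    move=> t. rewrite !norm2_sq dot_add_l !dot_add_r !dot_scale_l !dot_scale_r (dot_sym d xB); ring.
  have H := @foc _ _ f g Kh (fun x => norm2 x ^ 2) lam xB d (dot xB d) (dot d d) Hg HQ HxB.
  rewrite dotB -/zs in H.
  rewrite (@dot_ext _ _ (vadd (mv Kh zs) (vscale lam xB))) // dot_add_l dot_scale_l; lra.
set x1 := mv Kh w_star.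
set z1 := g (mv Kh x1).
have F1 : forall i, mv Kh z1 i + lam * x1 i = 0.
  have G : forall d, dot (vadd z1 (vscale lam w_star)) (mv K d) = 0.
    move=> d.
    have HQ : forall t, dot (vadd w_star (vscale t d)) (mv K (vadd w_star (vscale t d))) =
       dot w_star (mv K w_star) + 2 * t * dot w_star (mv K d) + t ^ 2 * dot d (mv K d).
      move=> t; rewrite mv_add mv_scale !dot_add_l !dot_add_r !dot_scale_l !dot_scale_r.
      rewrite (dotK d w_star) (dot_sym (mv K d) w_star); ring.
    have H := @foc _ _ f g K (fun w => dot w (mv K w)) lam w_star d (dot w_star (mv K d)) (dot d (mv K d)) Hg HQ Hw.
    rewrite dot_add_l dot_scale_l.
    have E : mv K w_star = mv Kh x1 by rewrite mvK.
    rewrite E -/z1 in H. lra.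
  have G2 := G (vadd z1 (vscale lam w_star)).
  rewrite mvK dotB in G2.
  move=> i; have := dot_eq0 G2 i.
  rewrite mv_add mv_scale /vadd /vscale //.
have Ex : x1 = xB.
  apply functional_extensionality.
  have M := @mono _ f g Hg Hc (mv Kh x1) (mv Kh xB).
  rewrite -/z1 -/zs -mv_sub dotB in M.
  have E : forall i, mv Kh (vsub z1 zs) i = (-lam) * (vsub x1 xB) i.
    move=> i; rewrite mv_sub /vsub; have := F1 i; have := FB i; lra.
  rewrite (dot_ext _ E) dot_scale_l in M.
  have := dot_ge0 (vsub x1 xB) => P.
  have Z0 : dot (vsub x1 xB) (vsub x1 xB) = 0 by nra.
  move=> i; have := dot_eq0 Z0 i; rewrite /vsub; lra.
have Ez : z1 = zs by rewrite /z1 Ex.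
set S := mm Kh St.
set xS := mv S alpha_star.
have EKS : mv Kh xS = mv K (mv St alpha_star) by rewrite /xS mv_mm mvK.
set zS := g (mv Kh xS).
have FS : forall b, dot (vadd (mv Kh zS) (vscale lam xS)) (mv S b) = 0.
  move=> b.
  set C := mm (tr St) (mm K St).
  have HC : forall u v, dot u (mv C v) = dot (mv St u) (mv K (mv St v)).
    move=> u v; rewrite /C mv_mm mv_mm dot_mv_tr; reflexivity.
  have HQ : forall t, dot (vadd alpha_star (vscale t b)) (mv C (vadd alpha_star (vscale t b))) =
       dot alpha_star (mv C alpha_star) + 2 * t * dot alpha_star (mv C b) + t ^ 2 * dot b (mv C b).
    move=> t; rewrite mv_add mv_scale !dot_add_l !dot_add_r !dot_scale_l !dot_scale_r.
    rewrite (HC b alpha_star) (HC alpha_star b) (dotK (mv St b)) (dot_sym (mv K (mv St b))); ring.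
  have Ha' : is_minimizer (fun a => f (mv (mm K St) a) + lam / 2 * dot a (mv C a)) alpha_star.
    move=> y; rewrite !(mv_mm K St); exact: Ha y.
  have H := @foc _ _ f g (mm K St) (fun a => dot a (mv C a)) lam alpha_star b
     (dot alpha_star (mv C b)) (dot b (mv C b)) Hg HQ Ha'.
  rewrite !(mv_mm K St) -EKS -/zS HC in H.
  have E : mv K (mv St b) = mv Kh (mv S b) by rewrite mvK /S mv_mm.
  rewrite E !dotB -/xS in H.
  have E2 : mv Kh (mv St alpha_star) = xS by rewrite /xS /S mv_mm.
  rewrite E2 in H.
  rewrite dot_add_l dot_scale_l; lra.
set A := mm (tr S) S.
move: Hpinv => [P1 [P2' [P3 P4]]].
set D := vsub zS zs. set u := mv Kh D.
set v := mv (tr S) u. set y := mv X v. set p := mv S y. set q := vsub u p.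
have HAX : forall c, dot (mv A y) (mv A c) = dot v (mv A c).
  move=> c.
  rewrite /y -(mv_mm A X v) dot_sym dot_mv_tr (mv_meq _ P3) (mv_mm A X (mv A c)).
  rewrite -(mv_mm X A c) -(mv_mm A (mm X A) c) (mv_meq _ P1) dot_sym //.
set e := vsub v (mv A y).
have he1 : forall c, dot e (mv A c) = 0.
  move=> c; rewrite /e dot_sub_l HAX; ring.
have TT : tr (tr S) = S by reflexivity.
have he2 : forall i, mv S e i = 0.
  apply dot_eq0; have := he1 e.
  rewrite /A mv_mm dot_mv_tr TT //.
have he3 : mv (tr S) q = e.
  rewrite /q mv_sub /p -(mv_mm (tr S) S y) //.
have he4 : forall i, e i = 0.
  apply dot_eq0. rewrite -{1}he3 -dot_mv_tr (dot_ext_r _ he2) dot0r //.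
have Horth : forall b, dot q (mv S b) = 0.
  move=> b; rewrite dot_mv_tr he3 (dot_ext _ he4) dot0l //.
have Eup : forall i, u i = vadd p q i by move=> i; rewrite /q /vadd /vsub; ring.
have Hpq : dot q p = 0 by rewrite /p Horth.
have HqxS : dot q xS = 0 by rewrite /xS Horth.
have HpF : dot (vadd (mv Kh zS) (vscale lam xS)) p = 0 by rewrite /p FS.
rewrite dot_add_l dot_scale_l in HpF.
have Hsplit : forall w, dot u w = dot p w + dot q w by move=> w; rewrite (dot_ext _ Eup) dot_add_l.
have EKzs : forall i, mv Kh zs i = (- lam) * xB i by move=> i; have := FB i; lra.
have CC := @coco _ f g Hg Hc mu Hl (mv Kh xS) (mv Kh xB).
rewrite -/zS -/zs -/D -mv_sub dotB -/u in CC.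
set Du := dot u (vsub xS xB) in CC.
set cq := dot q xB.
have KEY : lam * Du = - dot p p - lam * cq.
  have E0 : lam * Du = lam * dot u xS - lam * dot u xB by rewrite /Du dot_sub_r; ring.
  have E1 : dot u (mv Kh zs) = - lam * dot u xB by rewrite (dot_ext_r _ EKzs) dot_scale_r.
  have E2 : dot q (mv Kh zs) = - lam * cq by rewrite (dot_ext_r _ EKzs) dot_scale_r.
  have E3 : dot u p = dot (mv Kh zS) p - dot (mv Kh zs) p by rewrite /u /D mv_sub dot_sub_l.
  have E4 := Hsplit p. have E5 := Hsplit xS. have E6 := Hsplit (mv Kh zs).
  rewrite (dot_sym xS p) in HpF. rewrite Hpq in E4. rewrite E5 HqxS in E0.
  rewrite (dot_sym (mv Kh zs) p) in E3.
  lra.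
set M := mm Kh (mm (projS_perp S X) (tr Kh)).
have EM : dot D (mv M D) = dot q q.
  have Etr : mv (tr Kh) D = u.
    apply functional_extensionality => i; apply big_ext => j; by rewrite /tr Bsym.
  rewrite /M mv_mm mv_mm Etr /projS_perp mv_msub mv_idm /projS mv_mm mv_mm -/v -/y -/p -/q.
  rewrite dotB -/u Hsplit (dot_sym p q) Hpq; ring.
have Z0 : 0 <= Z by apply (proj1 HZ); left.
have ET : forall i, mv Kh (vsub wt w_star) i = (- / lam) * u i.
  move=> i; rewrite /wt mv_sub mv_scale -/x1 Ex -EKS -/zS /vsub /vscale /u /D mv_sub /vsub.
  have := FB i. move=> H. field_simplify_eq; [lra | lra].
rewrite (norm2_ext ET) norm2_scale Rabs_Ropp Rabs_pos_eq; last by apply Rlt_le, Rinv_0_lt_compat.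
rewrite -/x1 Ex.
have HmX : 0 <= mu * norm2 xB.
  have := Hl xB (fun _ => 0).
  rewrite (@norm2_ext _ (vsub xB (fun _ => 0)) xB); last by move=> i; rewrite /vsub; ring.
  have := norm2_ge0 (vsub (g xB) (g (fun _ => 0))). lra.
have NX := norm2_ge0 xB. have Nu := norm2_ge0 u.
have SX := norm2_sq xB. have Su := norm2_sq u.
have MAIN : dot u u <= lam * mu * Z ^ 2 * dot xB xB / 2.
  case: (classic (exists i, D i <> 0)) => [Hex | Hno].
  - have T0 : 0 < dot D D.
      case: Hex => i Hi. have := dot_ge0 D. case/Rle_lt_or_eq_dec => // H0.
      by have := dot_eq0 (esym H0) i.
    have Hmu : 0 < mu.
      have := Hl (mv Kh xS) (mv Kh xB). rewrite -/zS -/zs -/D.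
      have : 0 < norm2 D by apply sqrt_lt_R0.
      have := norm2_ge0 (vsub (mv Kh xS) (mv Kh xB)). nra.
    have Hdom : in_dom_conj f (vadd zs D).
      exists (dot (mv Kh xS) zS - f (mv Kh xS)) => w.
      have -> : vadd zs D = zS.
        apply functional_extensionality => i; rewrite /vadd /D /vsub; ring.
      have := @grad_ineq _ f g Hg Hc (mv Kh xS) w.
      rewrite -/zS dot_sub_r (dot_sym w zS) (dot_sym (mv Kh xS) zS). lra.
    have HZs := proj1 HZ _ (or_intror (ex_intro _ D (conj Hex (conj Hdom erefl)))).
    rewrite -/M EM norm2_sq in HZs.
    have Hq0 := dot_ge0 q.
    have Hr0 : 0 <= dot q q / dot D D by apply Rmult_le_pos; [lra | apply Rlt_le, Rinv_0_lt_compat; lra].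
    have HQZ : dot q q <= Z ^ 2 * dot D D.
      have : dot q q / dot D D <= Z ^ 2.
        rewrite -(sqrt_sqrt (dot q q / dot D D)) //.
        have := sqrt_pos (dot q q / dot D D). nra.
      move=> H. have -> : dot q q = dot q q / dot D D * dot D D by field; lra.
      nra.
    apply: (scalar lam mu Z (dot u u) (dot p p) (dot q q) (dot xB xB) (dot D D) cq Du) => //.
    + lra.
    + apply dot_ge0.
    + apply dot_ge0.
    + rewrite Hsplit (dot_sym p u) (dot_sym q u) !Hsplit (dot_sym p q) Hpq; ring.
    + apply cs_sq.
  - have U0 : forall i, u i = 0.
      move=> i; rewrite /u /mv big1 // => j _.
      have : D j = 0 by apply NNPP => H; apply Hno; exists j.
      move=> ->; ring.
    rewrite (dot_ext _ U0) dot0l.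
    have : 0 <= mu * dot xB xB by rewrite -SX; nra.
    have : 0 <= Z ^ 2 by nra.
    move=> H1 H2. have H3 := Rmult_le_pos _ _ H1 H2. have H4 : 0 <= lam / 2 * (Z ^ 2 * (mu * dot xB xB)) by apply Rmult_le_pos; lra. lra.
have Hil : 0 < / lam by apply Rinv_0_lt_compat.
case: (Rle_lt_dec 0 mu) => Hmu.
- have Hs : 0 <= mu / (2 * lam) by apply Rmult_le_pos; [lra | apply Rlt_le, Rinv_0_lt_compat; lra].
  set s := sqrt (mu / (2 * lam)).
  have Es : s * s = mu / (2 * lam) by rewrite /s sqrt_sqrt.
  have Hs0 : 0 <= s := sqrt_pos _.
  apply Rsqr_incr_0_var; last by apply Rmult_le_pos; [apply Rmult_le_pos|].
  rewrite /Rsqr.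
  have -> : s * Z * norm2 xB * (s * Z * norm2 xB) = (s * s) * Z ^ 2 * (norm2 xB ^ 2) by ring.
  have -> : / lam * norm2 u * (/ lam * norm2 u) = / lam * / lam * (norm2 u ^ 2) by ring.
  rewrite Es SX Su.
  have -> : mu / (2 * lam) * Z ^ 2 * dot xB xB = / lam * / lam * (lam * mu * Z ^ 2 * dot xB xB / 2) by field; lra.
  apply Rmult_le_compat_l => //; nra.
- have X0 : dot xB xB = 0.
    rewrite -SX. have : norm2 xB <= 0 by nra. nra.
  have U0 : dot u u <= 0 by rewrite X0 in MAIN; lra.
  have : norm2 u = 0 by rewrite /norm2; have := dot_ge0 u; move=> H; rewrite (Rle_antisym _ _ U0 H) sqrt_0.
  move=> ->. rewrite Rmult_0_r. apply Rmult_le_pos; [apply Rmult_le_pos|] => //; apply sqrt_pos.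
Qed.
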